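(* Let $m\geq3$ be an integer and let $k,j$ be integers with $1\leq k\leq j\leq\frac{m+2}{2}$. Define $$K_{m,j,k}=\int_0^\infty\left(\frac{t^{mk-j}}{(1+t^m)^{k-\frac12}}-t^{\frac m2-j}\right)dt\quad\text{if } j\leq\frac{m+1}{2},\qquad K_{m,j,k}=\int_0^\infty\left(\frac{t^{mk-\frac m2-1}}{(1+t^m)^{k-\frac12}}-\frac{1}{t+1}\right)dt\quad\text{if $m$ is even and } j=\frac{m+2}{2}.$$ Then $$K_{m,j,k}=\begin{cases}-\frac2m&\text{if } j=k=1,\\ -\frac{2k-1}{m+2-2j}B\left(k-\frac{j-1}{m},\frac12+\frac{j-1}{m}\right)&\text{if } 1\leq k\leq j\leq\frac{m+1}{2},\ j\neq1,\\ \frac2m\left(\ln2-\frac11-\frac13-\cdots-\frac1{2k-5}-\frac1{2k-3}\right)&\text{if $m$ is even and } 1\leq k\leq j=\frac{m+2}{2},\end{cases}$$ where $B$ is the beta function and the sum $\frac11+\frac13+\cdots+\frac1{2k-3}$ is empty when $k=1$.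
   Context: $B(z,w)=\int_0^1(1-u)^{z-1}u^{w-1}du=\frac{\Gamma(z)\Gamma(w)}{\Gamma(z+w)}$ is the beta function. *)

(* Defs.v *)
From Stdlib Require Import Reals.
From Coquelicot Require Import Coquelicot.
Open Scope R_scope.

Definition Beta (z w : R) : R :=
  RInt_gen (fun u => Rpower (1 - u) (z - 1) * Rpower u (w - 1))
           (at_right 0) (at_left 1).

Fixpoint odd_harm (n : nat) : R :=
  match n with
  | O => 0
  | S p => odd_harm p + / INR (2 * p + 1)
  end.

Definition Kint1 (m j k : nat) (t : R) : R :=
  Rpower t (INR m * INR k - INR j) / Rpower (1 + t ^ m) (INR k - / 2)
  - Rpower t (INR m / 2 - INR j).

Definition Kint2 (m k : nat) (t : R) : R :=
  Rpower t (INR m * INR k - INR m / 2 - 1) / Rpower (1 + t ^ m) (INR k - / 2)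
  - / (t + 1).

(* Main.v *)
Require Import Defs.
From Stdlib Require Import Reals Lra Lia.
From Coquelicot Require Import Coquelicot.
Open Scope R_scope.

Lemma ballR (x e y : R) : ball x e y <-> Rabs (y - x) < e.
Proof. reflexivity. Qed.

Lemma ln_le_xm1 x : 0 < x -> ln x <= x - 1.
Proof. intros Hx. pose proof (exp_ineq1_le (ln x)). rewrite exp_ln in H; lra. Qed.

Lemma Rpower_pos x a : 0 < Rpower x a.
Proof. unfold Rpower. apply exp_pos. Qed.

Lemma lim_Rpower_0 a : 0 < a -> filterlim (fun t => Rpower t a) (at_right 0) (locally 0).
Proof.
  intros Ha. apply filterlim_locally. intros eps.
  set (d := Rpower eps (/ a)).
  assert (Hd : 0 < d) by apply Rpower_pos.
  exists (mkposreal d Hd). intros t Ht Ht0. assert (Ht' : Rabs (t - 0) < d) by exact Ht. clear Ht.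
  apply ballR. rewrite Rminus_0_r, Rabs_pos_eq by (left; apply Rpower_pos).
  rewrite Rminus_0_r, Rabs_pos_eq in Ht' by lra.
  replace (pos eps) with (Rpower d a).
  - apply Rlt_Rpower_l; lra.
  - unfold d. rewrite Rpower_mult. replace (/ a * a) with 1 by (field; lra).
    apply Rpower_1, cond_pos.
Qed.

Lemma lim_Rpower_inf a : a < 0 -> filterlim (fun t => Rpower t a) (Rbar_locally p_infty) (locally 0).
Proof.
  intros Ha. apply filterlim_locally. intros eps.
  set (d := Rpower eps (/ a)).
  assert (Hd : 0 < d) by apply Rpower_pos.
  exists d. intros t Ht.
  apply ballR. rewrite Rminus_0_r, Rabs_pos_eq by (left; apply Rpower_pos).
  replace (pos eps) with (Rpower d a).
  - replace a with (- - a) by ring. rewrite (Rpower_Ropp t (-a)), (Rpower_Ropp d (-a)).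
    apply Rinv_lt_contravar.
    + apply Rmult_lt_0_compat; apply Rpower_pos.
    + apply Rlt_Rpower_l; lra.
  - unfold d. rewrite Rpower_mult. replace (/ a * a) with 1 by (field; lra).
    apply Rpower_1, cond_pos.
Qed.

Section Lims.
Context {T : Type} {F : (T -> Prop) -> Prop} {FF : Filter F}.

Lemma lim_plus (f g : T -> R) a b : filterlim f F (locally a) -> filterlim g F (locally b) ->
  filterlim (fun x => f x + g x) F (locally (a + b)).
Proof. intros Hf Hg. exact (filterlim_comp_2 f g Rplus Hf Hg (filterlim_plus a b)). Qed.

Lemma lim_mult (f g : T -> R) a b : filterlim f F (locally a) -> filterlim g F (locally b) ->
  filterlim (fun x => f x * g x) F (locally (a * b)).
Proof. intros Hf Hg. exact (filterlim_comp_2 f g Rmult Hf Hg (filterlim_mult a b)). Qed.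

Lemma lim_opp (f : T -> R) a : filterlim f F (locally a) ->
  filterlim (fun x => - f x) F (locally (- a)).
Proof. intros Hf. exact (filterlim_comp _ _ _ f Ropp F _ _ Hf (filterlim_opp a)). Qed.

Lemma lim_minus (f g : T -> R) a b : filterlim f F (locally a) -> filterlim g F (locally b) ->
  filterlim (fun x => f x - g x) F (locally (a - b)).
Proof. intros Hf Hg. apply lim_plus; auto. apply lim_opp; auto. Qed.

Lemma lim_cont (f : T -> R) (h : R -> R) a : filterlim f F (locally a) -> continuous h a ->
  filterlim (fun x => h (f x)) F (locally (h a)).
Proof. intros Hf Hh. exact (filterlim_comp _ _ _ f h F _ _ Hf Hh). Qed.

Lemma lim_ext (f g : T -> R) a : F (fun x => f x = g x) -> filterlim f F (locally a) ->
  filterlim g F (locally a).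
Proof. intros H Hf. exact (filterlim_ext_loc f g H Hf). Qed.

End Lims.

Lemma at_right_pos : at_right 0 (fun a => 0 < a).
Proof. exists (mkposreal 1 Rlt_0_1). intros; assumption. Qed.

Lemma pinf_pos : Rbar_locally p_infty (fun b => 0 < b).
Proof. exists 0. intros; assumption. Qed.

Lemma ftc_gen (F f : R -> R) la lb :
  (forall x, 0 < x -> is_derive F x (f x)) ->
  (forall x, 0 < x -> continuous f x) ->
  filterlim F (at_right 0) (locally la) ->
  filterlim F (Rbar_locally p_infty) (locally lb) ->
  is_RInt_gen f (at_right 0) (Rbar_locally p_infty) (lb - la).
Proof.
  intros HD HC Ha Hb.
  apply filterlimi_lim_ext_loc with (f := fun ab => F (snd ab) - F (fst ab)).
  - apply Filter_prod with (fun a => 0 < a) (fun b => 0 < b).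
    + apply at_right_pos.
    + apply pinf_pos.
    + intros a b Ha0 Hb0. simpl.
      assert (Hm : 0 < Rmin a b) by (apply Rmin_glb_lt; auto).
      apply (is_RInt_derive F f a b).
      * intros x Hx. apply HD. lra.
      * intros x Hx. apply HC. lra.
  - apply lim_minus.
    + exact (filterlim_comp _ _ _ snd F _ _ _ filterlim_snd Hb).
    + exact (filterlim_comp _ _ _ fst F _ _ _ filterlim_fst Ha).
Qed.

Lemma exd_cont (f : R -> R) x : ex_derive f x -> continuous f x.
Proof. intros H. exact (ex_derive_continuous f x H). Qed.

Lemma exp_le_exp a b : a <= b -> exp a <= exp b.
Proof.
  intros H. destruct (Rle_lt_or_eq_dec _ _ H) as [H'|H'].
  - left; apply exp_increasing; exact H'.
  - rewrite H'; right; reflexivity.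
Qed.

Lemma lim_eqv {T} {F : (T -> Prop) -> Prop} (f : T -> R) a b :
  filterlim f F (locally a) -> a = b -> filterlim f F (locally b).
Proof. intros H E; subst; exact H. Qed.

Lemma squeeze0 {T} {F : (T -> Prop) -> Prop} {FF : Filter F} (f g : T -> R) :
  F (fun x => Rabs (f x) <= g x) -> filterlim g F (locally 0) -> filterlim f F (locally 0).
Proof.
  intros Hb Hg. apply filterlim_locally. intros eps.
  pose proof (proj1 (filterlim_locally _ _) Hg eps) as Hg'.
  generalize (filter_and _ _ Hb Hg'). apply filter_imp. intros x [H1 H2].
  assert (H3 : Rabs (g x - 0) < eps) by exact H2.
  apply ballR. rewrite Rminus_0_r in *.
  apply Rle_lt_trans with (g x); auto.
  eapply Rle_lt_trans; [apply Rle_abs|exact H3].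
Qed.

Lemma within_lim {T} {F : (T -> Prop) -> Prop} {FF : Filter F} (f : T -> R) l (D : R -> Prop) :
  filterlim f F (locally l) -> F (fun x => D (f x)) -> filterlim f F (within D (locally l)).
Proof.
  intros Hl HD P HP. unfold within in HP. pose proof (Hl _ HP) as H.
  unfold filtermap in *. generalize (filter_and _ _ H HD). apply filter_imp.
  intros x [H1 H2]. auto.
Qed.

Definition E (m : nat) (a b t : R) := Rpower t a * Rpower (1 + t ^ m) b.

Lemma Rp_sub1 x a : 0 < x -> Rpower x (a - 1) = Rpower x a / x.
Proof. intros Hx. unfold Rminus. rewrite Rpower_plus, Rpower_Ropp, Rpower_1 by lra. reflexivity. Qed.

Lemma Rp_addn x a n : 0 < x -> Rpower x (a + INR n) = Rpower x a * x ^ n.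
Proof. intros Hx. rewrite Rpower_plus, Rpower_pow by lra. reflexivity. Qed.

Lemma pos_1pow t m : 0 < t -> 0 < 1 + t ^ m.
Proof. intros; pose proof (pow_lt t m H); lra. Qed.

Lemma E_derive m a b t : (1 <= m)%nat -> 0 < t ->
  is_derive (E m a b) t (a * E m (a - 1) b t + b * INR m * E m (a + INR m - 1) (b - 1) t).
Proof.
  intros Hm Ht. pose proof (pos_1pow t m Ht) as HS.
  unfold E. unfold Rpower at 1 2. auto_derive.
  - repeat split; lra.
  - fold (Rpower t a). fold (Rpower (1 + t^m) b).
    replace (a + INR m - 1) with ((a - 1) + INR m) by ring.
    rewrite Rp_addn, !Rp_sub1 by lra.
    destruct m as [|m']; [lia|]. simpl pred. simpl pow.
    simpl in HS. field. split; lra.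
Qed.

Lemma at_right_le x : filter_le (at_right x) (locally x).
Proof. intros P [eps H]. exists eps. intros y Hy _. apply H, Hy. Qed.
Lemma at_left_le x : filter_le (at_left x) (locally x).
Proof. intros P [eps H]. exists eps. intros y Hy _. apply H, Hy. Qed.

Lemma cont_right (h : R -> R) x : continuous h x -> filterlim h (at_right x) (locally (h x)).
Proof. intros H. eapply filterlim_filter_le_1; [apply at_right_le|exact H]. Qed.
Lemma cont_left (h : R -> R) x : continuous h x -> filterlim h (at_left x) (locally (h x)).
Proof. intros H. eapply filterlim_filter_le_1; [apply at_left_le|exact H]. Qed.

Lemma one_minus_left : filterlim (fun u => 1 - u) (at_left 1) (at_right 0).
Proof.
  intros P [eps H]. exists eps. intros y Hy Hy1. apply H.
  - apply ballR. apply ballR in Hy. replace (1 - y - 0) with (- (y - 1)) by ring.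
    rewrite Rabs_Ropp. exact Hy.
  - lra.
Qed.

Section BetaConv.
Variables z w : R.
Hypothesis Hz : 0 < z.
Hypothesis Hw : 0 < w.

Definition Hb (u : R) := Rpower (1 - u) (z - 1) * Rpower u (w - 1).
Definition Mb := exp (Rabs (z - 1) + Rabs (w - 1)).
Definition Gb (u : R) := Mb * (Rpower u w / w - Rpower (1 - u) z / z).

Lemma Hb_cont u : 0 < u < 1 -> continuous Hb u.
Proof.
  intros Hu. apply exd_cont. unfold Hb, Rpower. auto_derive. lra.
Qed.

Lemma Hb_ex x y : 0 < x < 1 -> 0 < y < 1 -> ex_RInt Hb x y.
Proof.
  intros Hx Hy. apply (ex_RInt_continuous (V:=R_CompleteNormedModule)). intros u Hu. apply Hb_cont.
  split.
  - apply Rlt_le_trans with (Rmin x y); [apply Rmin_glb_lt; lra | lra].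
  - apply Rle_lt_trans with (Rmax x y); [lra | apply Rmax_lub_lt; lra].
Qed.

Lemma ln2_lt_1 : ln 2 < 1.
Proof.
  assert (H1 : 1 <> 0) by lra. pose proof (exp_ineq1 1 H1). rewrite <- (ln_exp 1).
  apply ln_increasing; lra.
Qed.

Lemma Rpower_half_bound v c : / 2 <= v <= 1 -> Rpower v c <= exp (Rabs c).
Proof.
  intros Hv. unfold Rpower. apply exp_le_exp.
  assert (Hl1 : ln v <= 0).
  { rewrite <- ln_1. destruct (Rle_lt_or_eq_dec _ _ (proj2 Hv)) as [H|H].
    - left. apply ln_increasing; lra.
    - rewrite H; right; reflexivity. }
  assert (Hl2 : - 1 <= ln v).
  { assert (ln (/ 2) <= ln v).
    { destruct (Rle_lt_or_eq_dec _ _ (proj1 Hv)) as [H|H].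
      - left. apply ln_increasing; lra.
      - rewrite H. right; reflexivity. }
    rewrite ln_Rinv in H by lra. pose proof ln2_lt_1. lra. }
  apply Rle_trans with (Rabs (c * ln v)); [apply Rle_abs|].
  rewrite Rabs_mult. rewrite <- (Rmult_1_r (Rabs c)) at 2.
  apply Rmult_le_compat_l; [apply Rabs_pos|].
  unfold Rabs; destruct (Rcase_abs (ln v)); lra.
Qed.

Lemma Mb_pos : 0 < Mb.
Proof. apply exp_pos. Qed.

Lemma Hb_bound u : 0 < u < 1 ->
  0 <= Hb u <= Mb * (Rpower u (w - 1) + Rpower (1 - u) (z - 1)).
Proof.
  intros Hu. unfold Hb.
  pose proof (Rpower_pos (1 - u) (z - 1)) as HA.
  pose proof (Rpower_pos u (w - 1)) as HB.
  pose proof Mb_pos as HM.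
  split; [nra|].
  destruct (Rle_lt_dec u (/ 2)) as [H|H].
  - assert (Rpower (1 - u) (z - 1) <= Mb).
    { apply Rle_trans with (exp (Rabs (z - 1))).
      - apply Rpower_half_bound; lra.
      - unfold Mb. apply exp_le_exp. pose proof (Rabs_pos (w - 1)); lra. }
    nra.
  - assert (Rpower u (w - 1) <= Mb).
    { apply Rle_trans with (exp (Rabs (w - 1))).
      - apply Rpower_half_bound; lra.
      - unfold Mb. apply exp_le_exp. pose proof (Rabs_pos (z - 1)); lra. }
    nra.
Qed.

Definition gb (u : R) := Mb * (Rpower u (w - 1) + Rpower (1 - u) (z - 1)).

Lemma Gb_derive u : 0 < u < 1 -> is_derive Gb u (gb u).
Proof.
  intros Hu. unfold Gb, gb. unfold Rpower at 1 2. auto_derive.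
  - lra.
  - fold (Rpower u w). fold (Rpower (1 - u) z).
    replace (1 + - u) with (1 - u) by ring. fold (Rpower (1 - u) z).
    rewrite !Rp_sub1 by lra. field. lra.
Qed.

Lemma gb_cont u : 0 < u < 1 -> continuous gb u.
Proof. intros Hu. apply exd_cont. unfold gb, Rpower. auto_derive. lra. Qed.

Lemma in_minmax x y u : 0 < x < 1 -> 0 < y < 1 -> Rmin x y <= u <= Rmax x y -> 0 < u < 1.
Proof.
  intros Hx Hy Hu. split.
  - apply Rlt_le_trans with (Rmin x y); [apply Rmin_glb_lt; lra | lra].
  - apply Rle_lt_trans with (Rmax x y); [lra | apply Rmax_lub_lt; lra].
Qed.

Lemma gb_int x y : 0 < x < 1 -> 0 < y < 1 -> is_RInt gb x y (Gb y - Gb x).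
Proof.
  intros Hx Hy. apply (is_RInt_derive (V:=R_CompleteNormedModule) Gb gb).
  - intros v Hv. apply Gb_derive. apply (in_minmax x y); auto.
  - intro t. intro Ht. apply gb_cont. apply (in_minmax x y); auto.
Qed.

Lemma Hb_int_le x y : 0 < x < 1 -> 0 < y < 1 -> x <= y ->
  0 <= RInt Hb x y <= Gb y - Gb x.
Proof.
  intros Hx Hy Hxy. split.
  - apply RInt_ge_0; auto. apply Hb_ex; auto. intros u Hu. apply Hb_bound. lra.
  - rewrite <- (is_RInt_unique gb x y _ (gb_int x y Hx Hy)).
    apply RInt_le; auto.
    + apply Hb_ex; auto.
    + eexists; apply gb_int; auto.
    + intros u Hu. apply Hb_bound. lra.
Qed.

Lemma Hb_int_abs x y : 0 < x < 1 -> 0 < y < 1 ->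
  Rabs (RInt Hb x y) <= Rabs (Gb y - Gb x).
Proof.
  intros Hx Hy. destruct (Rle_lt_dec x y) as [H|H].
  - pose proof (Hb_int_le x y Hx Hy H). rewrite !Rabs_pos_eq; lra.
  - pose proof (Hb_int_le y x Hy Hx (Rlt_le _ _ H)).
    rewrite <- (opp_RInt_swap Hb y x) by (apply Hb_ex; auto).
    change (opp (RInt Hb y x)) with (- RInt Hb y x).
    rewrite Rabs_Ropp. rewrite Rabs_pos_eq by lra.
    rewrite <- Rabs_Ropp. rewrite Rabs_pos_eq; lra.
Qed.

Definition G0 := Mb * (0 / w - Rpower (1 - 0) z / z).
Definition G1 := Mb * (Rpower 1 w / w - 0 / z).

Lemma Gb_lim0 : filterlim Gb (at_right 0) (locally G0).
Proof.
  unfold Gb, G0. apply lim_mult; [apply filterlim_const|].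
  apply lim_minus.
  - apply lim_mult; [apply lim_Rpower_0; exact Hw| apply filterlim_const].
  - apply lim_mult; [|apply filterlim_const].
    apply (cont_right (fun u => Rpower (1 - u) z)).
    apply exd_cont. unfold Rpower. auto_derive. lra.
Qed.

Lemma Gb_lim1 : filterlim Gb (at_left 1) (locally G1).
Proof.
  unfold Gb, G1. apply lim_mult; [apply filterlim_const|].
  apply lim_minus.
  - apply lim_mult; [|apply filterlim_const].
    apply (cont_left (fun u => Rpower u w)).
    apply exd_cont. unfold Rpower. auto_derive. lra.
  - apply lim_mult; [|apply filterlim_const].
    apply (filterlim_comp _ _ _ (fun u => 1 - u) (fun t => Rpower t z) _ (at_right 0)).
    + apply one_minus_left.
    + apply lim_Rpower_0; exact Hz.
Qed.

Lemma at_right_01 : at_right 0 (fun a => 0 < a < 1).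
Proof.
  exists (mkposreal 1 Rlt_0_1). intros y Hy Hy0.
  assert (Hy' : Rabs (y - 0) < 1) by exact Hy.
  rewrite Rminus_0_r, Rabs_pos_eq in Hy' by lra. lra.
Qed.

Lemma at_left_01 : at_left 1 (fun a => 0 < a < 1).
Proof.
  exists (mkposreal 1 Rlt_0_1). intros y Hy Hy0.
  assert (Hy' : Rabs (y - 1) < 1) by exact Hy.
  apply Rabs_def2 in Hy'. lra.
Qed.

Lemma Beta_ex : exists l, is_RInt_gen Hb (at_right 0) (at_left 1) l.
Proof.
  assert (PF : ProperFilter (filter_prod (at_right 0) (at_left 1))).
  { apply filter_prod_proper. }
  assert (H1 : filter_prod (at_right 0) (at_left 1)
     (fun x => (exists y : R, is_RInt Hb (fst x) (snd x) y) /\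
        (forall y1 y2 : R, is_RInt Hb (fst x) (snd x) y1 -> is_RInt Hb (fst x) (snd x) y2 -> y1 = y2))).
  { apply Filter_prod with (fun a => 0 < a < 1) (fun a => 0 < a < 1).
    + apply at_right_01.
    + apply at_left_01.
    + intros a b Ha Hb'. split.
      * destruct (Hb_ex a b Ha Hb') as [l Hl]. exists l; exact Hl.
      * intros y1 y2 H1 H2. simpl in H1, H2.
        rewrite <- (is_RInt_unique _ _ _ _ H1). rewrite <- (is_RInt_unique _ _ _ _ H2). reflexivity. }
  apply (proj1 (Hierarchy.filterlimi_locally_cauchy (U := R_CompleteSpace) (fun ab => is_RInt Hb (fst ab) (snd ab)) H1)).
  intros eps.
    assert (He4 : 0 < eps / 4) by (pose proof (cond_pos eps); lra).
    set (e4 := mkposreal _ He4).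
    pose proof (proj1 (filterlim_locally _ _) Gb_lim0 e4) as L0.
    pose proof (proj1 (filterlim_locally _ _) Gb_lim1 e4) as L1.
    exists (fun ab => (0 < fst ab < 1 /\ ball G0 e4 (Gb (fst ab))) /\
                 (0 < snd ab < 1 /\ ball G1 e4 (Gb (snd ab)))).
    split.
    + apply Filter_prod with (fun a => 0 < a < 1 /\ ball G0 e4 (Gb a))
                             (fun a => 0 < a < 1 /\ ball G1 e4 (Gb a)).
      * apply filter_and; [apply at_right_01 | exact L0].
      * apply filter_and; [apply at_left_01 | exact L1].
      * intros a b Ha Hb'. simpl. auto.
    + intros [a b] [a' b'] [[Ha Ga] [Hb' Gb']] [[Ha' Ga'] [Hb'' Gb'']] u' v' Hu Hv.
      simpl in *.
      apply (is_RInt_unique (V:=R_CompleteNormedModule)) in Hu. apply (is_RInt_unique (V:=R_CompleteNormedModule)) in Hv.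
      subst u' v'.
      assert (Ga1 : Rabs (Gb a - G0) < eps / 4) by exact Ga.
      assert (Ga2 : Rabs (Gb a' - G0) < eps / 4) by exact Ga'.
      assert (Gb1 : Rabs (Gb b - G1) < eps / 4) by exact Gb'.
      assert (Gb2 : Rabs (Gb b' - G1) < eps / 4) by exact Gb''.
      clear Ga Ga' Gb' Gb''.
      assert (Hch : RInt Hb a b = RInt Hb a a' + RInt Hb a' b' + RInt Hb b' b).
      { rewrite <- (RInt_Chasles Hb a a' b) by (apply Hb_ex; auto).
        rewrite <- (RInt_Chasles Hb a' b' b) by (apply Hb_ex; auto).
        unfold plus; simpl. ring. }
      pose proof (Hb_int_abs a a' Ha Ha') as I1.
      pose proof (Hb_int_abs b' b Hb'' Hb') as I2.
      apply ballR. rewrite Hch.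
      replace (RInt Hb a' b' - (RInt Hb a a' + RInt Hb a' b' + RInt Hb b' b))
        with (- (RInt Hb a a' + RInt Hb b' b)) by ring.
      rewrite Rabs_Ropp.
      eapply Rle_lt_trans; [apply Rabs_triang|].
      assert (Rabs (Gb a' - Gb a) < eps / 2).
      { replace (Gb a' - Gb a) with ((Gb a' - G0) - (Gb a - G0)) by ring.
        eapply Rle_lt_trans; [apply Rabs_triang|]. rewrite Rabs_Ropp. lra. }
      assert (Rabs (Gb b - Gb b') < eps / 2).
      { replace (Gb b - Gb b') with ((Gb b - G1) - (Gb b' - G1)) by ring.
        eapply Rle_lt_trans; [apply Rabs_triang|]. rewrite Rabs_Ropp. lra. }
      simpl. lra.
Qed.

End BetaConv.

Lemma Beta_conv z w : 0 < z -> 0 < w ->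
  is_RInt_gen (Hb z w) (at_right 0) (at_left 1) (Beta z w).
Proof.
  intros Hz Hw. destruct (Beta_ex z w Hz Hw) as [l Hl].
  assert (Beta z w = l).
  { unfold Beta. apply (is_RInt_gen_unique (Fa := at_right 0) (Fb := at_left 1)). exact Hl. }
  rewrite H. exact Hl.
Qed.

Lemma Rp_S_pos t m c : 0 < t -> Rpower (1 + t ^ m) c > 0.
Proof. intros; apply Rpower_pos. Qed.

Lemma pow_pred_div t m : (1 <= m)%nat -> 0 < t -> t ^ Init.Nat.pred m = t ^ m / t.
Proof. intros Hm Ht. destruct m as [|m']; [lia|]. simpl. field. lra. Qed.

Section Case2.
Variables m j k : nat.
Hypothesis Hm : (3 <= m)%nat.
Hypothesis Hk : (1 <= k)%nat.
Hypothesis Hkj : (k <= j)%nat.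
Hypothesis Hj : (2 * j <= m + 1)%nat.

Let mr := INR m.
Let A := INR m * INR k - INR j.
Let ka := INR k - / 2.
Let p := INR m / 2 - INR j + 1.

Lemma mr_pos : 3 <= mr.
Proof. unfold mr. replace 3 with (INR 3) by (simpl; ring). apply le_INR; lia. Qed.

Lemma j_ge1 : 1 <= INR j.
Proof. replace 1 with (INR 1) by reflexivity. apply le_INR; lia. Qed.

Lemma k_ge1 : 1 <= INR k.
Proof. replace 1 with (INR 1) by reflexivity. apply le_INR; lia. Qed.

Lemma j_le : 2 * INR j <= mr + 1.
Proof.
  unfold mr. replace (2 * INR j) with (INR (2 * j)) by (rewrite mult_INR; reflexivity).
  replace (INR m + 1) with (INR (m + 1)) by (rewrite plus_INR; reflexivity).
  apply le_INR; lia.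
Qed.

Lemma kj_le : INR k <= INR j.
Proof. apply le_INR; lia. Qed.

Lemma p_pos : 0 < p.
Proof. unfold p. pose proof j_le. unfold mr in *. lra. Qed.

Lemma A_pos : 0 < A + 1.
Proof.
  unfold A. pose proof j_le. pose proof k_ge1. pose proof mr_pos. pose proof j_ge1. unfold mr in *. nra.
Qed.

Definition Pf (t : R) := (E m (A + 1) (- ka) t - E m p 0 t) / p.
Definition Qf (t : R) := mr * E m A (- ka - 1) t.

Lemma Kint1_eq t : 0 < t -> Kint1 m j k t = Rpower t A * Rpower (1 + t ^ m) (- ka) - Rpower t (p - 1).
Proof.
  intros Ht. unfold Kint1. rewrite Rpower_Ropp. fold A. fold ka.
  replace (INR m / 2 - INR j) with (p - 1) by (unfold p; ring). reflexivity.
Qed.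

Lemma Pf_derive t : 0 < t -> is_derive Pf t (Kint1 m j k t + ka / p * Qf t).
Proof.
  intros Ht. pose proof (pos_1pow t m Ht) as HS. pose proof p_pos as Hp.
  unfold Pf, E. unfold Rpower at 1 2 3 4. auto_derive.
  - repeat split; try lra; apply Rgt_not_eq, exp_pos.
  - fold (Rpower t (A + 1)). fold (Rpower (1 + t ^ m) (- ka)). fold (Rpower t p).
    fold (Rpower (1 + t ^ m) 0).
    rewrite Kint1_eq by auto. unfold Qf, E.
    rewrite Rpower_O by auto.
    replace (Rpower t (A + 1)) with (Rpower t A * t) by (rewrite Rpower_plus, Rpower_1; auto).
    replace (Rpower t p) with (Rpower t (p - 1) * t)
      by (rewrite <- (Rpower_1 t) at 2 by auto; rewrite <- Rpower_plus; f_equal; ring).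
    replace (Rpower (1 + t ^ m) (- ka)) with (Rpower (1 + t ^ m) (- ka - 1) * (1 + t ^ m))
      by (rewrite <- (Rpower_1 (1 + t ^ m)) at 2 by auto; rewrite <- Rpower_plus; f_equal; ring).
    rewrite (pow_pred_div t m) by (lia || lra).
    unfold mr, ka, p, A in *. field. repeat split; lra.
Qed.

Lemma f1_cont t : 0 < t -> continuous (fun t => Kint1 m j k t + ka / p * Qf t) t.
Proof.
  intros Ht. pose proof (pos_1pow t m Ht) as HS. apply exd_cont.
  unfold Kint1, Qf, E, Rpower. auto_derive.
  repeat split; try lra; apply Rgt_not_eq, exp_pos.
Qed.

Lemma cont0_S c : continuous (fun t => Rpower (1 + t ^ m) c) 0.
Proof.
  apply exd_cont. unfold Rpower. auto_derive.
  rewrite pow_i by lia. lra.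
Qed.

Lemma Pf_lim0 : filterlim Pf (at_right 0) (locally 0).
Proof.
  pose proof p_pos. pose proof A_pos.
  unfold Pf, E, Rdiv.
  eapply lim_eqv.
  - apply lim_mult; [|apply filterlim_const].
    apply lim_minus; apply lim_mult.
    + apply lim_Rpower_0; auto.
    + apply (cont_right (fun t => Rpower (1 + t ^ m) (- ka))). apply cont0_S.
    + apply lim_Rpower_0; auto.
    + apply (cont_right (fun t => Rpower (1 + t ^ m) 0)). apply cont0_S.
  - lazymatch goal with |- ?a = ?b => change (@eq R a b) end. ring.
Qed.

Lemma Pf_bound t : 0 < t -> Rabs (Pf t) <= ka / p * Rpower t (p - mr).
Proof.
  intros Ht. pose proof (pos_1pow t m Ht) as HS. pose proof p_pos as Hp.
  pose proof (pow_lt t m Ht) as Htm.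
  assert (Hka : 0 < ka) by (unfold ka; pose proof k_ge1; lra).
  set (d := ln (1 + t ^ m) - ln (t ^ m)).
  assert (Hd0 : 0 <= d).
  { unfold d. left. apply Rlt_Rminus. apply ln_increasing; lra. }
  assert (Hd1 : d <= / t ^ m).
  { unfold d. rewrite <- ln_div by lra.
    eapply Rle_trans; [apply ln_le_xm1; apply Rdiv_lt_0_compat; lra|].
    right. field. lra. }
  assert (HPf : Pf t = Rpower t p * (exp (- ka * d) - 1) / p).
  { unfold Pf, E. rewrite Rpower_O by lra. unfold Rpower, d.
    rewrite ln_pow by lra.
    rewrite Rmult_minus_distr_l, Rmult_1_r, <- exp_plus.
    rewrite <- exp_plus. replace ((A + 1) * ln t + - ka * ln (1 + t ^ m)) with (p * ln t + - ka * (ln (1 + t ^ m) - INR m * ln t)) by (unfold A, p, ka; field). reflexivity. }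
  rewrite HPf.
  assert (He1 : exp (- ka * d) <= 1).
  { rewrite <- exp_0. apply exp_le_exp. nra. }
  assert (He2 : 1 - ka * d <= exp (- ka * d)).
  { pose proof (exp_ineq1_le (- ka * d)). lra. }
  unfold Rdiv. rewrite !Rabs_mult. rewrite Rabs_pos_eq by (left; apply Rpower_pos).
  rewrite Rabs_left1 by lra. rewrite Rabs_pos_eq by (left; apply Rinv_0_lt_compat; lra).
  replace (Rpower t (p - mr)) with (Rpower t p * / t ^ m).
  2:{ unfold Rminus. rewrite Rpower_plus, Rpower_Ropp. unfold mr. rewrite Rpower_pow by lra. reflexivity. }
  pose proof (Rpower_pos t p).
  assert (- (exp (- ka * d) - 1) <= ka * / t ^ m).
  { assert (ka * d <= ka * / t ^ m) by (apply Rmult_le_compat_l; lra). lra. }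
  assert (0 < / p) by (apply Rinv_0_lt_compat; lra).
  apply Rle_trans with (Rpower t p * (ka * / t ^ m) * / p).
  - apply Rmult_le_compat_r; [lra|]. apply Rmult_le_compat_l; lra.
  - right. field. lra.
Qed.

Lemma Pf_liminf : filterlim Pf (Rbar_locally p_infty) (locally 0).
Proof.
  apply squeeze0 with (g := fun t => ka / p * Rpower t (p - mr)).
  - exists 0. intros t Ht. apply Pf_bound; auto.
  - eapply lim_eqv.
    + apply lim_mult; [apply filterlim_const|]. apply lim_Rpower_inf.
      unfold p, mr. pose proof j_ge1. pose proof mr_pos. unfold mr in *. lra.
    + lazymatch goal with |- ?a = ?b => change (@eq R a b) end. ring.
Qed.

Let zB := INR k - (INR j - 1) / INR m.
Let wB := / 2 + (INR j - 1) / INR m.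

Definition vf (t : R) := / (1 + t ^ m).
Definition dvf (t : R) := - (INR m * t ^ Init.Nat.pred m) / (1 + t ^ m) ^ 2.

Lemma vf_derive t : 0 < t -> is_derive vf t (dvf t).
Proof.
  intros Ht. pose proof (pos_1pow t m Ht). unfold vf, dvf. auto_derive.
  - lra.
  - field. lra.
Qed.

Lemma dvf_cont t : 0 < t -> continuous dvf t.
Proof.
  intros Ht. pose proof (pos_1pow t m Ht). apply exd_cont. unfold dvf. auto_derive.
  pose proof (pow_lt _ 2 H). lra.
Qed.

Lemma vf_range t : 0 < t -> 0 < vf t < 1.
Proof.
  intros Ht. pose proof (pow_lt t m Ht). unfold vf. split.
  - apply Rinv_0_lt_compat; lra.
  - rewrite <- Rinv_1. apply Rinv_lt_contravar; lra.
Qed.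

Lemma Q_id t : 0 < t -> dvf t * Hb zB wB (vf t) = - Qf t.
Proof.
  intros Ht. pose proof (pos_1pow t m Ht) as HS. pose proof (pow_lt t m Ht) as Htm.
  pose proof mr_pos as Hmr.
  assert (E1 : t ^ m / t / (1 + t ^ m) ^ 2 = exp (mr * ln t - ln t - 2 * ln (1 + t ^ m))).
  { unfold Rminus. rewrite !exp_plus, !exp_Ropp. unfold mr. rewrite <- ln_pow by lra.
    replace (2 * ln (1 + t ^ m)) with (ln (1 + t ^ m) + ln (1 + t ^ m)) by ring.
    rewrite exp_plus, !exp_ln by lra. field. lra. }
  assert (E2 : 1 - vf t = t ^ m / (1 + t ^ m)) by (unfold vf; field; lra).
  assert (E3 : ln (1 - vf t) = mr * ln t - ln (1 + t ^ m)).
  { rewrite E2, ln_div by lra. unfold mr. rewrite ln_pow by lra. reflexivity. }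
  assert (E4 : ln (vf t) = - ln (1 + t ^ m)).
  { unfold vf. rewrite ln_Rinv by lra. reflexivity. }
  unfold dvf, Hb, Qf, E, Rpower. rewrite E3, E4.
  rewrite (pow_pred_div t m) by (lia || lra).
  replace (- (INR m * (t ^ m / t)) / (1 + t ^ m) ^ 2) with (- (mr * (t ^ m / t / (1 + t ^ m) ^ 2)))
    by (unfold mr; field; split; lra).
  rewrite E1. rewrite <- !Rmult_assoc.
  replace (- (mr * exp (mr * ln t - ln t - 2 * ln (1 + t ^ m))) *
     exp ((zB - 1) * (mr * ln t - ln (1 + t ^ m))) * exp ((wB - 1) * - ln (1 + t ^ m)))
    with (- (mr * (exp (mr * ln t - ln t - 2 * ln (1 + t ^ m)) *
     exp ((zB - 1) * (mr * ln t - ln (1 + t ^ m))) * exp ((wB - 1) * - ln (1 + t ^ m)))))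
    by ring.
  rewrite <- !exp_plus. try rewrite (Rmult_assoc mr (exp _) (exp _)), <- exp_plus.
  f_equal. f_equal. f_equal.
  unfold zB, wB, A, ka, mr in *. field. lra.
Qed.

Lemma zB_pos : 0 < zB.
Proof.
  unfold zB. pose proof k_ge1. pose proof j_le. pose proof mr_pos. unfold mr in *.
  assert ((INR j - 1) / INR m < 1).
  { apply (Rmult_lt_reg_r (INR m)); [lra|]. unfold Rdiv. rewrite Rmult_assoc, Rinv_l by lra. lra. }
  lra.
Qed.

Lemma wB_pos : 0 < wB.
Proof.
  unfold wB. pose proof j_ge1. pose proof mr_pos. unfold mr in *.
  assert (0 <= (INR j - 1) / INR m) by (apply Rdiv_le_0_compat; lra). lra.
Qed.

Lemma Q_int a b : 0 < a -> 0 < b -> is_RInt Qf a b (RInt (Hb zB wB) (vf b) (vf a)).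
Proof.
  intros Ha Hb0.
  assert (Hm0 : 0 < Rmin a b) by (apply Rmin_glb_lt; auto).
  pose proof (is_RInt_comp (V := R_CompleteNormedModule) (Hb zB wB) vf dvf a b) as H.
  rewrite <- (opp_RInt_swap (V := R_CompleteNormedModule)) by
    (apply Hb_ex; apply vf_range; auto).
  apply (is_RInt_ext (fun y => opp (scal (dvf y) (Hb zB wB (vf y))))).
  - intros x Hx. unfold opp, scal; simpl. unfold mult; simpl.
    change (- (dvf x * Hb zB wB (vf x)) = Qf x). rewrite Q_id by lra. ring.
  - apply (is_RInt_opp (V := R_CompleteNormedModule)). apply H.
    + intros x Hx. apply Hb_cont. apply vf_range. lra.
    + intros x Hx. split; [apply vf_derive|apply dvf_cont]; lra.
Qed.

Lemma vf_0 : filterlim vf (at_right 0) (at_left 1).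
Proof.
  apply within_lim.
  - eapply lim_eqv.
    + apply cont_right. apply exd_cont. unfold vf. auto_derive. rewrite pow_i by lia. lra.
    + unfold vf. rewrite pow_i by lia. rewrite Rplus_0_r. apply Rinv_1.
  - generalize at_right_pos. apply filter_imp. intros x Hx. apply vf_range; auto.
Qed.

Lemma vf_inf : filterlim vf (Rbar_locally p_infty) (at_right 0).
Proof.
  apply within_lim.
  - apply squeeze0 with (g := fun b => Rpower b (- 1)).
    + exists 0. intros b Hb0. cbv beta. replace (-1) with (- (1)) by ring. rewrite Rpower_Ropp, Rpower_1 by auto.
      pose proof (vf_range b Hb0). rewrite Rabs_pos_eq by lra.
      unfold vf. apply Rinv_le_contravar; auto.
      pose proof (pow_lt b m Hb0).
      destruct (Rle_lt_dec 1 b).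
      * assert (b ^ 1 <= b ^ m) by (apply Rle_pow; auto; lia). simpl in H1. lra.
      * lra.
    + apply lim_Rpower_inf. lra.
  - generalize pinf_pos. apply filter_imp. intros x Hx. apply vf_range; auto.
Qed.

Lemma Q_gen : is_RInt_gen Qf (at_right 0) (Rbar_locally p_infty) (Beta zB wB).
Proof.
  apply filterlimi_lim_ext_loc with (f := fun ab => RInt (Hb zB wB) (vf (snd ab)) (vf (fst ab))).
  - apply Filter_prod with (fun a => 0 < a) (fun b => 0 < b).
    + apply at_right_pos.
    + apply pinf_pos.
    + intros a b Ha Hb0. apply Q_int; auto.
  - pose proof (Beta_conv zB wB zB_pos wB_pos) as HB.
    assert (L : filterlim (fun xy => RInt (Hb zB wB) (fst xy) (snd xy))
                 (filter_prod (at_right 0) (at_left 1)) (locally (Beta zB wB))).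
    { apply filterlim_locally. intros eps.
      pose proof (proj1 (filterlimi_locally _ _) HB eps) as H.
      generalize H. apply filter_imp. intros x [z0 [Hz1 Hz2]].
      rewrite (is_RInt_unique (V := R_CompleteNormedModule) _ _ _ _ Hz1). exact Hz2. }
    apply (filterlim_comp _ _ _ (fun ab => (vf (snd ab), vf (fst ab)))
             (fun xy => RInt (Hb zB wB) (fst xy) (snd xy)) _ (filter_prod (at_right 0) (at_left 1))).
    + apply filterlim_pair.
      * exact (filterlim_comp _ _ _ snd vf _ _ _ filterlim_snd vf_inf).
      * exact (filterlim_comp _ _ _ fst vf _ _ _ filterlim_fst vf_0).
    + exact L.
Qed.

Lemma case2 : is_RInt_gen (Kint1 m j k) (at_right 0) (Rbar_locally p_infty)
       (- ((2 * INR k - 1) / (INR m + 2 - 2 * INR j)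
           * Beta (INR k - (INR j - 1) / INR m) (/ 2 + (INR j - 1) / INR m))).
Proof.
  pose proof (ftc_gen Pf (fun t => Kint1 m j k t + ka / p * Qf t) 0 0 Pf_derive f1_cont Pf_lim0 Pf_liminf) as H1.
  pose proof (is_RInt_gen_scal (Fa := at_right 0) (Fb := Rbar_locally p_infty) Qf (ka / p) _ Q_gen) as H2.
  pose proof (is_RInt_gen_minus (Fa := at_right 0) (Fb := Rbar_locally p_infty) _ _ _ _ H1 H2) as H3.
  eapply is_RInt_gen_ext in H3.
  - replace (- ((2 * INR k - 1) / (INR m + 2 - 2 * INR j) *
       Beta (INR k - (INR j - 1) / INR m) (/ 2 + (INR j - 1) / INR m)))
      with (minus (0 - 0) (scal (ka / p) (Beta zB wB))).
    + exact H3.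
    + unfold minus, plus, opp, scal; simpl. unfold mult; simpl. unfold zB, wB.
      pose proof p_pos. unfold ka, p in *. field. lra.
  - apply Filter_prod with (fun _ => True) (fun _ => True); try apply filter_true.
    intros a b _ _ x _. unfold minus, plus, opp, scal; simpl. unfold mult; simpl. ring.
Qed.
End Case2.

Lemma Beta_1_half : Beta 1 (/ 2) = 2.
Proof.
  apply (is_RInt_gen_unique (Fa := at_right 0) (Fb := at_left 1)).
  assert (H : is_RInt_gen (Hb 1 (/ 2)) (at_right 0) (at_left 1) (2 * sqrt 1 - 0)).
  2:{ rewrite sqrt_1 in H. replace (2 * 1 - 0) with 2 in H by ring. exact H. }
  apply filterlimi_lim_ext_loc with (f := fun ab => 2 * sqrt (snd ab) - 2 * sqrt (fst ab)).
  - apply Filter_prod with (fun a => 0 < a < 1) (fun a => 0 < a < 1).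
    + apply at_right_01.
    + apply at_left_01.
    + intros a b Ha Hb0. simpl.
      apply (is_RInt_derive (V := R_CompleteNormedModule) (fun u => 2 * sqrt u)).
      * intros x Hx. pose proof (in_minmax a b x Ha Hb0 Hx) as Hx'.
        auto_derive; [lra|].
        unfold Hb. replace (1 - 1) with 0 by ring. rewrite Rpower_O by lra.
        rewrite Rp_sub1, Rpower_sqrt by lra.
        pose proof (sqrt_lt_R0 x (proj1 Hx')).
        pattern x at 3. rewrite <- (sqrt_sqrt x) by lra. field. lra.
      * intros x Hx. pose proof (in_minmax a b x Ha Hb0 Hx) as Hx'.
        apply Hb_cont. exact Hx'.
  - apply lim_minus.
    + apply (filterlim_comp _ _ _ snd (fun u => 2 * sqrt u) _ (at_left 1) _ filterlim_snd).
      apply (cont_left (fun u => 2 * sqrt u) 1). apply exd_cont. auto_derive. lra.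
    + apply (filterlim_comp _ _ _ fst (fun u => 2 * sqrt u) _ (at_right 0) _ filterlim_fst).
      eapply lim_eqv.
      * apply lim_mult; [apply filterlim_const|].
        apply (cont_right sqrt 0). apply continuous_sqrt.
      * rewrite sqrt_0. lazymatch goal with |- ?a = ?b => change (@eq R a b) end. ring.
Qed.

Lemma case1 (m : nat) : (3 <= m)%nat ->
  is_RInt_gen (Kint1 m 1 1) (at_right 0) (Rbar_locally p_infty) (- (2 / INR m)).
Proof.
  intros Hm.
  pose proof (case2 m 1 1 Hm (le_n 1) (le_n 1) ltac:(lia)) as H.
  replace (INR 1 - (INR 1 - 1) / INR m) with 1 in H by (simpl; field; pose proof (lt_0_INR m ltac:(lia)); lra).
  replace (/ 2 + (INR 1 - 1) / INR m) with (/ 2) in H by (simpl; field; pose proof (lt_0_INR m ltac:(lia)); lra).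
  rewrite Beta_1_half in H.
  replace (- (2 / INR m)) with (- ((2 * INR 1 - 1) / (INR m + 2 - 2 * INR 1) * 2)).
  - exact H.
  - simpl. field. pose proof (lt_0_INR m ltac:(lia)). lra.
Qed.

Fixpoint ohx (p : nat) (x : R) : R :=
  match p with
  | O => 0
  | S p' => ohx p' x + x ^ (2 * p' + 1) / INR (2 * p' + 1)
  end.

Fixpoint sx (p : nat) (x : R) : R :=
  match p with
  | O => 0
  | S p' => sx p' x + x ^ (2 * p')
  end.

Lemma ohx_derive p x : is_derive (ohx p) x (sx p x).
Proof.
  induction p as [|p IH]; simpl.
  - apply (is_derive_const (K := R_AbsRing) (V := R_NormedModule) 0).
  - apply (is_derive_plus (K := R_AbsRing) (V := R_NormedModule) (ohx p) (fun x => x ^ (2 * p + 1) / INR (2 * p + 1))); [exact IH|].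
    auto_derive.
    + assert (0 < INR (p + (p + 0) + 1)) by (apply lt_0_INR; lia). lra.
    + replace (Init.Nat.pred (p + (p + 0) + 1)) with (p + (p + 0))%nat by lia.
      assert (0 < INR (p + (p + 0) + 1)) by (apply lt_0_INR; lia).
      set (y := x ^ (p + (p + 0))). field. lra.
Qed.

Lemma ohx_1 p : ohx p 1 = odd_harm p.
Proof.
  induction p as [|p IH]; simpl; [reflexivity|].
  rewrite IH, pow1. unfold Rdiv. rewrite Rmult_1_l. reflexivity.
Qed.

Lemma ohx_0 p : ohx p 0 = 0.
Proof.
  induction p as [|p IH]; simpl; [reflexivity|].
  rewrite IH, pow_i by lia. unfold Rdiv. ring.
Qed.

Lemma sx_id p x : sx p x * (1 - x ^ 2) = 1 - x ^ (2 * p).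
Proof.
  induction p as [|p IH]; cbn [sx].
  - simpl. ring.
  - rewrite Rmult_plus_distr_r, IH.
    replace (x ^ (2 * S p)) with (x ^ (2 * p) * x ^ 2) by (rewrite <- pow_add; f_equal; lia).
    set (y := x ^ (2 * p)). ring.
Qed.

Lemma ohx_cont p x : continuous (ohx p) x.
Proof. apply exd_cont. eexists. apply ohx_derive. Qed.

Lemma param T s : 0 < s -> s * s = 1 + T ^ 2 ->
  exists u, 0 < u /\ T = (u ^ 2 - 1) / (2 * u) /\ s = (u ^ 2 + 1) / (2 * u).
Proof.
  intros Hs HT. exists (T + s).
  assert (Hu : 0 < T + s) by nra.
  split; [exact Hu|]. split.
  - apply (Rmult_eq_reg_r (2 * (T + s))); [|lra].
    unfold Rdiv. rewrite Rmult_assoc, Rinv_l by lra. rewrite Rmult_1_r. nra.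
  - apply (Rmult_eq_reg_r (2 * (T + s))); [|lra].
    unfold Rdiv. rewrite Rmult_assoc, Rinv_l by lra. rewrite Rmult_1_r. nra.
Qed.

Section Case3.
Variables n k : nat.
Hypothesis Hn : (2 <= n)%nat.
Hypothesis Hk : (1 <= k)%nat.

Lemma n_pos : 0 < INR n.
Proof. apply lt_0_INR; lia. Qed.

Lemma t2n t : t ^ (2 * n) = (t ^ n) ^ 2.
Proof. rewrite <- pow_mult. f_equal. lia. Qed.

Lemma L1 t : 0 < t -> is_derive (fun t => ln (t ^ n + sqrt (1 + t ^ (2 * n)))) t
   (INR n * (t ^ n / t) / sqrt (1 + t ^ (2 * n))).
Proof.
  intros Ht. pose proof (pow_lt t n Ht) as HT. pose proof (pos_1pow t (2 * n) Ht) as HS.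
  pose proof (sqrt_lt_R0 _ HS) as Hs.
  auto_derive.
  all: try replace (n + (n + 0))%nat with (2 * n)%nat by lia.
  - lra.
  - rewrite !(pow_pred_div t) by (lia || lra).
    rewrite mult_INR. rewrite t2n in *.
    set (T := t ^ n) in *. set (s := sqrt (1 + T ^ 2)) in *.
    assert (Hss : s * s = 1 + T ^ 2) by (apply sqrt_sqrt; lra).
    clearbody T s.
    destruct (param T s Hs Hss) as [u [Hu [E1 E2]]]. subst T s.
    pose proof n_pos. simpl INR.
    field. repeat split; try lra; nra.
Qed.

Definition Xf (t : R) := t ^ n / sqrt (1 + t ^ (2 * n)).

Lemma L2 t : 0 < t -> is_derive Xf t
   (INR n * (t ^ n / t) / ((1 + t ^ (2 * n)) * sqrt (1 + t ^ (2 * n)))).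
Proof.
  intros Ht. pose proof (pow_lt t n Ht) as HT. pose proof (pos_1pow t (2 * n) Ht) as HS.
  pose proof (sqrt_lt_R0 _ HS) as Hs.
  unfold Xf. auto_derive.
  all: try replace (n + (n + 0))%nat with (2 * n)%nat by lia.
  - lra.
  - rewrite !(pow_pred_div t) by (lia || lra).
    rewrite mult_INR. rewrite t2n in *.
    set (T := t ^ n) in *. set (s := sqrt (1 + T ^ 2)) in *.
    assert (Hss : s * s = 1 + T ^ 2) by (apply sqrt_sqrt; lra).
    clearbody T s.
    destruct (param T s Hs Hss) as [u [Hu [E1 E2]]]. subst T s.
    pose proof n_pos. simpl INR.
    field. repeat split; try lra; nra.
Qed.

Definition G3 (t : R) := / INR n * (ln (t ^ n + sqrt (1 + t ^ (2 * n))) - ohx (k - 1) (Xf t)) - ln (t + 1).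

Lemma Kint2_eq t : 0 < t -> Kint2 (2 * n) k t =
  (t ^ n / t) * (t ^ n) ^ (2 * (k - 1)) / ((sqrt (1 + t ^ (2 * n)) * sqrt (1 + t ^ (2 * n))) ^ (k - 1) * sqrt (1 + t ^ (2 * n))) - / (t + 1).
Proof.
  intros Ht. pose proof (pos_1pow t (2 * n) Ht) as HS.
  unfold Kint2. f_equal.
  replace (INR (2 * n) * INR k - INR (2 * n) / 2 - 1) with (INR (n - 1) + INR (n * (2 * (k - 1)))).
  2:{ rewrite !mult_INR, !minus_INR by lia. simpl. field. }
  replace (INR k - / 2) with (INR (k - 1) + / 2).
  2:{ rewrite minus_INR by lia. simpl. field. }
  rewrite !Rpower_plus, !Rpower_pow, Rpower_sqrt by lra.
  rewrite sqrt_sqrt by lra.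
  rewrite pow_mult. replace (n - 1)%nat with (Init.Nat.pred n) by lia.
  rewrite pow_pred_div by (lia || lra). reflexivity.
Qed.

Lemma G3_derive t : 0 < t -> is_derive G3 t (Kint2 (2 * n) k t).
Proof.
  intros Ht. pose proof (pow_lt t n Ht) as HT. pose proof (pos_1pow t (2 * n) Ht) as HS.
  pose proof (sqrt_lt_R0 _ HS) as Hs. pose proof n_pos as Hn0.
  assert (H3 : is_derive (fun t => ohx (k - 1) (Xf t)) t
     (scal (INR n * (t ^ n / t) / ((1 + t ^ (2 * n)) * sqrt (1 + t ^ (2 * n)))) (sx (k - 1) (Xf t)))).
  { apply (is_derive_comp (ohx (k - 1)) Xf). apply ohx_derive. apply L2; auto. }
  assert (H4 : is_derive (fun t => ln (t + 1)) t (/ (t + 1))).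
  { auto_derive; [lra|]. field. lra. }
  assert (H5 := is_derive_minus _ _ _ _ _ (L1 t Ht) H3).
  assert (H6 := is_derive_scal _ _ (/ INR n) _ H5).
  assert (H7 := is_derive_minus _ _ _ _ _ H6 H4).
  eapply is_derive_ext in H7.
  2:{ intros x. reflexivity. }
  unfold G3.
  replace (Kint2 (2 * n) k t) with
    (minus (scal (/ INR n) (minus (INR n * (t ^ n / t) / sqrt (1 + t ^ (2 * n)))
       (scal (INR n * (t ^ n / t) / ((1 + t ^ (2 * n)) * sqrt (1 + t ^ (2 * n)))) (sx (k - 1) (Xf t)))))
       (/ (t + 1))).
  { exact H7. }
  rewrite Kint2_eq by auto.
  unfold minus, plus, opp, scal; simpl. unfold mult; simpl.
  replace (n + (n + 0))%nat with (2 * n)%nat by lia.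
  replace (k - 1 + (k - 1 + 0))%nat with (2 * (k - 1))%nat by lia.
  pose proof (sx_id (k - 1) (Xf t)) as Hid.
  assert (HX : 1 - Xf t ^ 2 = / (1 + t ^ (2 * n))).
  { unfold Xf. rewrite t2n in *. set (T := t ^ n) in *.
    assert (Hss : sqrt (1 + T ^ 2) * sqrt (1 + T ^ 2) = 1 + T ^ 2) by (apply sqrt_sqrt; lra).
    pose proof (sqrt_lt_R0 (1 + T ^ 2) HS) as Hs'.
    set (s := sqrt (1 + T ^ 2)) in *.
    replace (1 - (T / s) ^ 2) with ((s * s - T ^ 2) / (s * s)) by (field; lra).
    replace (s * s - T ^ 2) with 1 by lra. rewrite Hss. field. lra. }
  rewrite HX in Hid.
  assert (HXp : Xf t ^ (2 * (k - 1)) = (t ^ n) ^ (2 * (k - 1)) / (sqrt (1 + t ^ (2 * n)) * sqrt (1 + t ^ (2 * n))) ^ (k - 1)).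
  { unfold Xf. unfold Rdiv. rewrite Rpow_mult_distr, pow_inv. f_equal. f_equal.
    rewrite pow_mult. f_equal. ring. }
  rewrite HXp in Hid.
  set (Y := (t ^ n) ^ (2 * (k - 1))) in *.
  set (Z := (sqrt (1 + t ^ (2 * n)) * sqrt (1 + t ^ (2 * n))) ^ (k - 1)) in *.
  assert (HZ : 0 < Z) by (apply pow_lt; nra).
  set (W := sx (k - 1) (Xf t)) in *.
  set (s := sqrt (1 + t ^ (2 * n))) in *.
  set (T := t ^ n) in *. set (S := 1 + t ^ (2 * n)) in *.
  assert (W = S * (1 - Y / Z)) by (rewrite <- Hid; field; lra).
  rewrite H. field. repeat split; lra.
Qed.

Lemma Kint2_cont t : 0 < t -> continuous (Kint2 (2 * n) k) t.
Proof.
  intros Ht. pose proof (pos_1pow t (2 * n) Ht) as HS. apply exd_cont.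
  unfold Kint2, Rpower. auto_derive.
  all: try replace (n + (n + 0))%nat with (2 * n)%nat by lia.
  repeat split; try lra; apply Rgt_not_eq, exp_pos.
Qed.

Lemma G3_lim0 : filterlim G3 (at_right 0) (locally 0).
Proof.
  pose proof n_pos.
  assert (C1 : continuous (fun t => ln (t ^ n + sqrt (1 + t ^ (2 * n)))) 0).
  { apply exd_cont. auto_derive. rewrite !pow_i by lia. rewrite Rplus_0_r, sqrt_1. lra. }
  assert (C2 : continuous Xf 0).
  { apply exd_cont. unfold Xf. auto_derive. rewrite !pow_i by lia. rewrite Rplus_0_r, sqrt_1. lra. }
  assert (C3 : continuous (fun t => ln (t + 1)) 0).
  { apply exd_cont. auto_derive. lra. }
  unfold G3. eapply lim_eqv.
  - apply lim_minus.
    + apply lim_mult; [apply filterlim_const|]. apply lim_minus.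
      * apply (cont_right (fun t => ln (t ^ n + sqrt (1 + t ^ (2 * n)))) 0 C1).
      * apply lim_cont; [apply (cont_right Xf 0 C2)|apply ohx_cont].
    + apply (cont_right (fun t => ln (t + 1)) 0 C3).
  - unfold Xf. rewrite !pow_i by lia. rewrite Rplus_0_r, sqrt_1, Rplus_0_l, ln_1.
    unfold Rdiv. rewrite Rmult_0_l, ohx_0. lazymatch goal with |- ?a = ?b => change (@eq R a b) end. ring.
Qed.

Definition Aw (w : R) := (1 - w) ^ n + sqrt (w ^ (2 * n) + (1 - w) ^ (2 * n)).
Definition Bw (w : R) := (1 - w) ^ n / sqrt (w ^ (2 * n) + (1 - w) ^ (2 * n)).
Definition Psi (w : R) := / INR n * (ln (Aw w) - ohx (k - 1) (Bw w)).

Lemma G3_Psi t : 0 < t -> G3 t = Psi (/ (t + 1)).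
Proof.
  intros Ht. pose proof n_pos. pose proof (pow_lt t n Ht) as HT.
  assert (HP : 0 < (t + 1) ^ n) by (apply pow_lt; lra).
  assert (Hr : 1 - / (t + 1) = t * / (t + 1)) by (field; lra).
  assert (E1 : (1 - / (t + 1)) ^ n = t ^ n / (t + 1) ^ n).
  { rewrite Hr, Rpow_mult_distr, pow_inv. reflexivity. }
  assert (E2 : (/ (t + 1)) ^ (2 * n) + (1 - / (t + 1)) ^ (2 * n) = (1 + t ^ (2 * n)) / ((t + 1) ^ n) ^ 2).
  { rewrite !t2n, E1, pow_inv. field. lra. }
  assert (E3 : sqrt ((1 + t ^ (2 * n)) / ((t + 1) ^ n) ^ 2) = sqrt (1 + t ^ (2 * n)) / (t + 1) ^ n).
  { rewrite sqrt_div_alt by nra. rewrite sqrt_pow2 by lra. reflexivity. }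
  pose proof (pos_1pow t (2 * n) Ht) as HS. pose proof (sqrt_lt_R0 _ HS) as Hs.
  unfold Psi, Aw, Bw, G3, Xf. rewrite E2, E3, E1.
  replace (t ^ n / (t + 1) ^ n + sqrt (1 + t ^ (2 * n)) / (t + 1) ^ n)
    with ((t ^ n + sqrt (1 + t ^ (2 * n))) / (t + 1) ^ n) by (field; lra).
  replace (t ^ n / (t + 1) ^ n / (sqrt (1 + t ^ (2 * n)) / (t + 1) ^ n))
    with (t ^ n / sqrt (1 + t ^ (2 * n))) by (field; lra).
  rewrite ln_div, ln_pow by lra.
  set (o := ohx (k - 1) (t ^ n / sqrt (1 + t ^ (2 * n)))).
  set (L := ln (t ^ n + sqrt (1 + t ^ (2 * n)))).
  field. lra.
Qed.

Lemma w_inf : filterlim (fun t => / (t + 1)) (Rbar_locally p_infty) (locally 0).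
Proof.
  apply squeeze0 with (g := fun b => Rpower b (- (1))).
  - exists 0. intros b Hb0. cbv beta. rewrite Rpower_Ropp, Rpower_1 by auto.
    rewrite Rabs_pos_eq by (left; apply Rinv_0_lt_compat; lra).
    apply Rinv_le_contravar; lra.
  - apply lim_Rpower_inf. lra.
Qed.

Lemma G3_liminf : filterlim G3 (Rbar_locally p_infty) (locally (2 / INR (2 * n) * (ln 2 - odd_harm (k - 1)))).
Proof.
  pose proof n_pos.
  assert (Hc : continuous Psi 0).
  { assert (CA : continuous (fun w => ln (Aw w)) 0).
    { apply exd_cont. unfold Aw. auto_derive.
      replace (1 + - 0) with 1 by ring. rewrite !pow1, !pow_i by lia. rewrite Rplus_0_l, sqrt_1. repeat split; lra. }
    assert (CB : continuous Bw 0).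
    { apply exd_cont. unfold Bw. auto_derive.
      replace (1 + - 0) with 1 by ring. rewrite !pow1, !pow_i by lia. rewrite Rplus_0_l, sqrt_1. repeat split; lra. }
    unfold Psi. apply (continuous_mult (K := R_AbsRing) (fun _ => / INR n)).
    - apply continuous_const.
    - apply (continuous_minus (K := R_AbsRing) (fun w => ln (Aw w))); auto.
      apply (continuous_comp Bw (ohx (k - 1))); auto. apply ohx_cont. }
  apply (lim_ext (fun t => Psi (/ (t + 1)))).
  - exists 0. intros t Ht. symmetry. apply G3_Psi; auto.
  - eapply lim_eqv.
    + apply (lim_cont (fun t => / (t + 1)) Psi 0 w_inf Hc).
    + unfold Psi, Aw, Bw. rewrite !pow_i by lia. rewrite Rplus_0_l, Rminus_0_r, !pow1, sqrt_1. replace (1 + 1) with 2 by ring. replace (1 / 1) with 1 by field. rewrite ohx_1.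
      rewrite mult_INR. simpl INR. lazymatch goal with |- ?a = ?b => change (@eq R a b) end. field. lra.
Qed.

Lemma case3 : is_RInt_gen (Kint2 (2 * n) k) (at_right 0) (Rbar_locally p_infty)
       (2 / INR (2 * n) * (ln 2 - odd_harm (k - 1))).
Proof.
  replace (2 / INR (2 * n) * (ln 2 - odd_harm (k - 1)))
    with (2 / INR (2 * n) * (ln 2 - odd_harm (k - 1)) - 0) by ring.
  apply ftc_gen with (F := G3).
  - apply G3_derive.
  - apply Kint2_cont.
  - apply G3_lim0.
  - apply G3_liminf.
Qed.
End Case3.

Theorem theoremA2 (m k j : nat) :
  (3 <= m)%nat -> (1 <= k)%nat -> (k <= j)%nat -> (2 * j <= m + 2)%nat ->
  (* case j = k = 1 *)
  ((j = 1%nat /\ k = 1%nat) ->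
     is_RInt_gen (Kint1 m j k) (at_right 0) (Rbar_locally p_infty)
       (- (2 / INR m))) /\
  (* case 1 <= k <= j <= (m+1)/2, j <> 1 *)
  ((2 * j <= m + 1)%nat -> j <> 1%nat ->
     is_RInt_gen (Kint1 m j k) (at_right 0) (Rbar_locally p_infty)
       (- ((2 * INR k - 1) / (INR m + 2 - 2 * INR j)
           * Beta (INR k - (INR j - 1) / INR m) (/ 2 + (INR j - 1) / INR m)))) /\
  (* case m even, 1 <= k <= j = (m+2)/2 *)
  (Nat.Even m -> (2 * j = m + 2)%nat ->
     is_RInt_gen (Kint2 m k) (at_right 0) (Rbar_locally p_infty)
       (2 / INR m * (ln 2 - odd_harm (k - 1)))).

Proof.
  intros Hm Hk Hkj Hj. split; [|split].
  - intros [-> ->]. apply case1; auto.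
  - intros Hj1 _. apply case2; auto.
  - intros [n ->] Hj2. apply case3; lia.
Qed.
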